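(* For every $p\in\{1,\dots,K\}$ the total number of waiting clients in the top $p$ priority levels is geometrically distributed under $P$: for all integers $k\ge0$, $$\sum_{\substack{\mathbf n\in\mathbb N_0^K\\ n_1+\dots+n_p=k}}P(\mathbf n)=(1-\sigma_p)\,\sigma_p^{\,k}.$$ In particular the level-1 marginal is $(1-r_1)r_1^k$ and the total queue length is $(1-r)r^k$.
   Context: Fix integers $c\ge 1$, $K\ge 2$ and reals $r_1,\dots,r_K>0$ with $r=\sum_{k=1}^K r_k<1$ (here $r_k=\lambda_k/(c\mu)$ for an M/M/$c$ queue with $K$ non-preemptive priority levels, level 1 the highest). Write $\sigma_k=\sum_{j=1}^k r_j$, $\mathbf e_\kappa$ for the standard unit vectors of $\mathbb Z^K$, $\delta_{ij}$ for the Kronecker delta. Consider the equations for $(p_{\mathbf n})_{\mathbf n\in\mathbb N_0^K}$, with the convention $p_{\mathbf n}=0$ if some component of $\mathbf n$ is negative: $$(1+r)p_{\mathbf n}=\Big(\prod_{j=1}^K\delta_{0n_j}\Big)p_{\mathbf n}+\sum_{\kappa=1}^K\Big[r_\kappa p_{\mathbf n-\mathbf e_\kappa}+\Big(\prod_{j=1}^{\kappa-1}\delta_{0n_j}\Big)p_{\mathbf n+\mathbf e_\kappa}\Big],\quad \mathbf n\in\mathbb N_0^K .$$ These are the stationary balance equations for the states in which all $c$ servers are busy and $n_\kappa$ clients of level $\kappa$ wait in the queue; their nonnegative summable solutions form a one-dimensional cone, and $P$ denotes the unique solution with $\sum_{\mathbf n}P(\mathbf n)=1$. *)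

(* Defs.v *)
From HB Require Import structures.
From mathcomp Require Import all_boot all_order all_algebra.
From mathcomp Require Import all_classical all_reals.
From mathcomp Require Import ereal esum.
Set Implicit Arguments. Unset Strict Implicit. Unset Printing Implicit Defensive.
Import Order.TTheory GRing.Theory Num.Theory.
Local Open Scope ring_scope.

(* States n = (n_1,...,n_K) in N_0^K; level kappa (1-based in the paper) is
   the ordinal i : 'I_K with kappa = i + 1. *)
Definition state (K : nat) := {ffun 'I_K -> nat}.

Definition incr K (n : state K) (i : 'I_K) : state K :=
  [ffun j => if j == i then (n j).+1 else n j].
(* n - e_i (only used when n i > 0) *)
Definition decr K (n : state K) (i : 'I_K) : state K :=
  [ffun j => if j == i then (n j).-1 else n j].

(* p_{n - e_i}, with the convention p = 0 when a component is negative *)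
Definition pminus (R : ringType) K (P : state K -> R) (n : state K) (i : 'I_K) : R :=
  if n i == 0%N then 0 else P (decr n i).

Definition balance_eqs (R : ringType) K (r : 'I_K -> R) (P : state K -> R) : Prop :=
  forall n : state K,
    (1 + \sum_(i < K) r i) * P n =
      (if [forall j, n j == 0%N] then P n else 0)
      + \sum_(i < K) (r i * pminus P n i
                      + (if [forall j : 'I_K, (j < i)%N ==> (n j == 0%N)]
                         then P (incr n i) else 0)).

Definition sigma (R : ringType) K (r : 'I_K -> R) (p : nat) : R :=
  \sum_(i < K | (i < p)%N) r i.

Definition topsum K (n : state K) (p : nat) : nat :=
  \sum_(i < K | (i < p)%N) n i.

(* Main.v *)
Require Import Defs.
From HB Require Import structures.
From mathcomp Require Import all_boot all_order all_algebra.
From mathcomp Require Import all_classical all_reals.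
From mathcomp Require Import ereal esum.
From mathcomp Require Import topology normedtype sequences.
From mathcomp Require Import lra.
Import numFieldNormedType.Exports.
Import Order.TTheory GRing.Theory Num.Theory.
Local Open Scope classical_set_scope.
Local Open Scope ring_scope.
Set Implicit Arguments. Unset Strict Implicit. Unset Printing Implicit Defensive.

Definition cond K (i : 'I_K) (n : state K) : bool :=
  [forall j : 'I_K, (j < i)%N ==> (n j == 0%N)].

Lemma incrE K (n : state K) i j : incr n i j = (n j + (j == i))%N.
Proof. by rewrite ffunE; case: eqP => _; rewrite ?addn1 ?addn0. Qed.

Lemma decr_incr K (n : state K) i : decr (incr n i) i = n.
Proof. by apply/ffunP => j; rewrite !ffunE; case: eqP => // ->. Qed.

Lemma incr_decr K (n : state K) i : n i != 0%N -> incr (decr n i) i = n.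
Proof. by move=> ni; apply/ffunP => j; rewrite !ffunE; case: eqP => // ->; rewrite prednK // lt0n. Qed.

Lemma incr_inj K (i : 'I_K) : injective (fun n : state K => incr n i).
Proof. by move=> m n /(congr1 (fun x : state K => decr x i)); rewrite !decr_incr. Qed.

Lemma incr_i K (n : state K) i : incr n i i != 0%N.
Proof. by rewrite ffunE eqxx. Qed.

Lemma topsum_incr K (n : state K) (i : 'I_K) p : topsum (incr n i) p = (topsum n p + (i < p))%N.
Proof.
rewrite /topsum; under eq_bigr do rewrite incrE; rewrite big_split /=; congr addn.
rewrite big_mkcond (bigD1 i) //= eqxx big1 ?addn0; first by case: (i < p)%N.
by move=> j /negbTE ->; case: (j < p)%N.
Qed.

Lemma topsum_decr K (n : state K) (i : 'I_K) p : n i != 0%N ->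
  topsum n p = (topsum (decr n i) p + (i < p))%N.
Proof. by move=> ni; rewrite -topsum_incr incr_decr. Qed.

Lemma cond_incr K (n : state K) (i : 'I_K) : cond i (incr n i) = cond i n.
Proof.
apply: eq_forallb => j; rewrite ffunE; case: (eqVneq j i) => [->|//]; by rewrite ltnn.
Qed.

Lemma cond_decr K (n : state K) (i : 'I_K) : cond i (decr n i) = cond i n.
Proof.
apply: eq_forallb => j; rewrite ffunE; case: (eqVneq j i) => [->|//]; by rewrite ltnn.
Qed.

Lemma esum_incr (R : realType) K (i : 'I_K) (b : state K -> \bar R) :
  (forall n, (0 <= b n)%E) ->
  \esum_(n in [set: state K]) b (incr n i) =
  \esum_(n in [set: state K]) (if n i != 0%N then b n else 0%E).
Proof.
move=> b0.
rewrite -(reindex_esum [set: state K] [set m : state K | m i != 0%N] (fun n : state K => incr n i)); last first.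
  split.
  - by move=> n _ /=; exact: incr_i.
  - by move=> m n _ _; exact: incr_inj.
  - by move=> m /= mi; exists (decr m i) => //; rewrite incr_decr.
rewrite esum_mkcond; apply: eq_esum => n _.
by rewrite (_ : (n \in _) = (n i != 0%N)) //; apply/idP/idP; rewrite inE.
Qed.
Lemma point (R : ringType) K (p k : nat) (P : state K -> R) (n : state K) :
  (if topsum n p == k then (if [forall j, n j == 0%N] then P n else 0) else 0)
  + \sum_(i < K) (if (n i != 0%N) && ((topsum n p == k + (i < p))%N && cond i n)
                  then P n else 0)
  = (if topsum n p == k.+1 then P n else 0)
    + (if (k == 0%N) && (topsum n p == 0%N) then P n else 0).
Proof.
case: (boolP [forall j, n j == 0%N]) => [/forallP z | nz].
  have t0 : topsum n p = 0%N by rewrite /topsum big1 // => j _; apply/eqP.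
  rewrite big1; last by move=> i _; rewrite z.
  by rewrite t0 addr0; case: k => [|k] /=; rewrite ?addr0 ?add0r.
have [j0 hj0] : exists j, n j != 0%N.
  by move/forallPn: (nz) => [j /= hj]; exists j.
case: (@arg_minnP _ j0 (fun i : 'I_K => n i != 0%N) (fun i : 'I_K => nat_of_ord i) hj0) => i0 ni0 imin.
have ci0 : cond i0 n.
  apply/forallP => j; apply/implyP => ji; apply: contraLR ji => nj.
  by rewrite -leqNgt; apply: imin.
rewrite if_same add0r (bigD1 i0) //= ni0 ci0 /= big1 ?addr0; last first.
  move=> i ii0; case: (boolP (n i != 0%N)) => //= ni.
  case: (boolP (cond i n)) => ci; last by rewrite andbF.
  have lt : (i0 < i)%N by rewrite ltn_neqAle imin // andbT; apply: contra ii0 => /eqP/val_inj ->.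
  by move/forallP: ci => /(_ i0) /implyP /(_ lt) /eqP e; move: ni0; rewrite e.
case: (ltnP i0 p) => hp.
  have tpos : (0 < topsum n p)%N.
    by rewrite /topsum (bigD1 i0) //= ltn_addr // lt0n.
  by rewrite addn1 (negbTE (lt0n_neq0 tpos)) andbF addr0 andbT.
have t0 : topsum n p = 0%N.
  rewrite /topsum big1 // => j jp; apply/eqP.
  by move/forallP: ci0 => /(_ j) /implyP; apply; apply: leq_trans jp hp.
by rewrite t0 addn0 andbT; case: k => [|k] /=; rewrite ?addr0 ?add0r.
Qed.
Section ES.
Local Open Scope ereal_scope.
Lemma esumZ_le (R : realType) (T : choiceType) (I : set T) (a : T -> \bar R) (c : R) :
  (0 <= c)%R -> (forall i, (0 <= a i)%E) ->
  (\esum_(i in I) (c%:E * a i) <= c%:E * \esum_(i in I) a i)%E.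
Proof.
move=> c0 a0; apply: ge_ereal_sup => /= _ [X [finX XI]] <-.
rewrite -ge0_mule_fsumr//; apply: lee_wpmul2l; first by rewrite lee_fin.
by apply: ereal_sup_ubound; exists X.
Qed.

Lemma esumZl (R : realType) (T : choiceType) (I : set T) (a : T -> \bar R) (c : R) :
  (0 < c)%R -> (forall i, (0 <= a i)%E) ->
  \esum_(i in I) (c%:E * a i) = (c%:E * \esum_(i in I) a i)%E.
Proof.
move=> c0 a0; apply/eqP; rewrite eq_le esumZ_le ?(ltW c0)//=.
have h := @esumZ_le R T I (fun i => c%:E * a i)%E c^-1 (ltW (ltac:(by rewrite invr_gt0) : (0 < c^-1)%R)) _.
have /h : forall i, 0 <= c%:E * a i by move=> i; rewrite mule_ge0// lee_fin ltW.
under eq_esum do rewrite muleA -EFinM mulVf ?gt_eqF// mul1e.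
move=> H. have c0' : 0 <= c%:E by rewrite lee_fin ltW.
apply: le_trans (lee_wpmul2l c0' H) _.
by rewrite muleA -EFinM divff ?gt_eqF// mul1e.
Qed.

End ES.

Lemma EFin_if (R : realType) (b : bool) (x : R) :
  (if b then x else 0)%:E = (if b then x%:E else 0%E).
Proof. by case: b. Qed.

Lemma esumDE (R : realType) (T : choiceType) (I : set T) (f g : T -> R) :
  (forall x, 0 <= f x) -> (forall x, 0 <= g x) ->
  \esum_(x in I) (f x + g x)%:E = (\esum_(x in I) (f x)%:E + \esum_(x in I) (g x)%:E)%E.
Proof.
move=> f0 g0; under eq_esum do rewrite EFinD.
by rewrite esumD // => x _; rewrite lee_fin.
Qed.

Lemma esum_sumE (R : realType) (T : choiceType) (I : set T) K (F : 'I_K -> T -> R) :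
  (forall i x, 0 <= F i x) ->
  \esum_(x in I) (\sum_(i < K) F i x)%:E = (\sum_(i < K) \esum_(x in I) (F i x)%:E)%E.
Proof.
move=> F0; under eq_esum do rewrite -sumEFin.
by rewrite esum_sum // => x i _ _; rewrite lee_fin.
Qed.

Lemma esum_dep (R : realType) K (A : state K -> bool) (a : state K -> R) (i : 'I_K) :
  (forall n, 0 <= a n) ->
  \esum_(n in [set: state K]) (if A n then a (incr n i) else 0)%:E =
  \esum_(n in [set: state K]) (if (n i != 0%N) && A (decr n i) then a n else 0)%:E.
Proof.
move=> a0.
pose b (m : state K) := (if (m i != 0%N) && A (decr m i) then a m else 0)%:E.
transitivity (\esum_(n in [set: state K]) b (incr n i)).
  by apply: eq_esum => n _; rewrite /b incr_i decr_incr.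
rewrite esum_incr; last by move=> n; rewrite /b lee_fin; case: ifP.
by apply: eq_esum => n _; rewrite /b; case: (n i != 0%N).
Qed.

Lemma esum_arr (R : realType) K (A : state K -> bool) (a : state K -> R) (i : 'I_K) :
  (forall n, 0 <= a n) ->
  \esum_(n in [set: state K]) (if A n then (if n i == 0%N then 0 else a (decr n i)) else 0)%:E =
  \esum_(n in [set: state K]) (if A (incr n i) then a n else 0)%:E.
Proof.
move=> a0.
pose c (n : state K) := (if A n then (if n i == 0%N then 0 else a (decr n i)) else 0)%:E.
transitivity (\esum_(n in [set: state K]) (if n i != 0%N then c n else 0%E)).
  by apply: eq_esum => n _; rewrite /c; case: eqP => //= _; rewrite if_same.
rewrite -esum_incr; last by move=> n; rewrite /c lee_fin; do 2 case: ifP => //.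
by apply: eq_esum => n _; rewrite /c (negbTE (incr_i n i)) decr_incr.
Qed.

Unset Implicit Arguments.

Theorem mainTheorem4 (R : realType) (c K : nat) (r : 'I_K -> R)
  (hc : (1 <= c)%N) (hK : (2 <= K)%N)
  (hr : forall i, 0 < r i) (hsum : \sum_(i < K) r i < 1)
  (P : state K -> R)
  (hP0 : forall n, 0 <= P n)
  (hP1 : \esum_(n in [set: state K]) (P n)%:E = 1%E)
  (hbal : balance_eqs r P) :
  forall (p k : nat), (1 <= p <= K)%N ->
    \esum_(n in [set n : state K | topsum n p = k]) (P n)%:E
      = ((1 - sigma r p) * sigma r p ^+ k)%:E.
Proof.
move=> p k0 _.
set s := sigma r p; set rr := \sum_(i < K) r i.
pose G k := \esum_(n in [set: state K]) (if topsum n p == k then P n else 0)%:E.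
have Fset k : \esum_(n in [set n : state K | topsum n p = k]) (P n)%:E = G k.
  rewrite esum_mkcond; apply: eq_esum => n _; rewrite EFin_if.
  by rewrite (_ : (n \in _) = (topsum n p == k)) //; apply/idP/idP; rewrite inE => /eqP.
have Gfin k : G k = (fine (G k))%:E.
  have G0 : (0 <= G k)%E by apply: esum_ge0 => n _; rewrite lee_fin; case: ifP.
  rewrite fineK // ge0_fin_numE // (le_lt_trans _ (ltry 1)) // -hP1.
  by apply: le_esum => n _; rewrite lee_fin; case: ifP.
pose f k := fine (G k).
have rr0 : 0 <= rr by apply: sumr_ge0 => i _; exact: ltW.
have nnif (b : bool) (x : R) : 0 <= x -> 0 <= (if b then x else 0).
  by move=> x0; case: b.
have rec k : (1 + rr) * f k = (\sum_(i < K) r i * (if (i < p)%N then (if k is k'.+1 then f k' else 0) else f k))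
     + (f k.+1 + (if k == 0%N then f 0%N else 0)).
  pose X' n := if topsum n p == k then (if [forall j, n j == 0%N] then P n else 0) else 0.
  pose PM i n := if topsum n p == k then pminus P n i else 0.
  pose D i n := if (topsum n p == k) && cond i n then P (incr n i) else 0.
  pose D' (i : 'I_K) (n : state K) := if (n i != 0%N) && ((topsum n p == k + (i < p))%N && cond i n) then P n else 0.
  have pw n : (1 + rr) * (if topsum n p == k then P n else 0) = X' n + \sum_(i < K) (r i * PM i n + D i n).
    rewrite /X' /PM /D; case: (topsum n p == k) => /=.
      by rewrite hbal.
    by rewrite mulr0 big1 ?addr0 // => i _; rewrite mulr0 add0r.
  have PMv i : \esum_(n in [set: state K]) (PM i n)%:E = (if (i < p)%N then (if k is k'.+1 then f k' else 0) else f k)%:E.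
    rewrite /PM /pminus (@esum_arr R K (fun n => topsum n p == k) P i hP0).
    under eq_esum do rewrite topsum_incr.
    case: ifP => ip.
      case: k {X' PM D D' pw} => [|k].
        by rewrite esum1 // => n _; rewrite addn1.
      by under eq_esum do rewrite addn1 eqSS; rewrite -/(G k) Gfin.
    by under eq_esum do rewrite addn0; rewrite -/(G k) Gfin.
  have Dv i : \esum_(n in [set: state K]) (D i n)%:E = \esum_(n in [set: state K]) (D' i n)%:E.
    rewrite /D (@esum_dep R K (fun n => (topsum n p == k) && cond i n) P i hP0).
    apply: eq_esum => n _; rewrite /D'; case: (boolP (n i != 0%N)) => //= ni.
    by rewrite cond_decr (topsum_decr p ni) eqn_add2r.
  have XD : (\esum_(n in [set: state K]) (X' n)%:E + \sum_(i < K) \esum_(n in [set: state K]) (D' i n)%:E)%E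
          = (f k.+1 + (if k == 0%N then f 0%N else 0))%:E.
    rewrite -esum_sumE; last by move=> i n; rewrite /D'; apply: (nnif).
    rewrite -esumDE; first last.
    - by move=> n; apply: sumr_ge0 => i _; rewrite /D'; apply: (nnif).
    - by move=> n; rewrite /X'; apply: (nnif); apply: (nnif).
    under eq_esum do rewrite /X' /D' point.
    rewrite esumDE; first last.
    - by move=> n; apply: (nnif).
    - by move=> n; apply: (nnif).
    rewrite -/(G k.+1) Gfin EFinD; congr (_ + _)%E.
    case: k {X' PM D D' pw PMv Dv} => [|k] /=.
      by rewrite -/(G 0%N) Gfin.
    by rewrite esum1.
  apply: EFin_inj.
  rewrite EFinM /f -Gfin /G -esumZl; first last.
  - by move=> n; rewrite lee_fin; apply: (nnif).
  - by rewrite ltr_pwDl.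
  under eq_esum do rewrite -EFinM pw.
  rewrite esumDE; first last.
  - by move=> n; apply: sumr_ge0 => i _; rewrite /PM /D; apply: addr_ge0; [apply: mulr_ge0; [exact: ltW|]|]; rewrite /pminus; do 2 (try case: ifP => _).
  - by move=> n; rewrite /X'; apply: (nnif); apply: (nnif).
  have PM0 i n : 0 <= PM i n by rewrite /PM /pminus; apply: (nnif); case: ifP.
  have D0 i n : 0 <= D i n by rewrite /D; apply: (nnif).
  rewrite esum_sumE; last by move=> i n; apply: addr_ge0 => //; apply: mulr_ge0 => //; exact: ltW.
  transitivity (\esum_(n in [set: state K]) (X' n)%:E +
     \sum_(i < K) ((r i)%:E * (\esum_(n in [set: state K]) (PM i n)%:E) + (\esum_(n in [set: state K]) (D' i n)%:E)))%E.
    congr (_ + _)%E; apply: eq_bigr => i _.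
    rewrite esumDE //; last by move=> n; apply: mulr_ge0 => //; exact: ltW.
    rewrite -Dv; congr (_ + _)%E.
    under eq_esum do rewrite EFinM.
    by rewrite esumZl // => n; rewrite lee_fin.
  rewrite big_split /= addeCA XD.
  under eq_bigr do rewrite PMv -EFinM.
  by rewrite sumEFin -EFinD.
have s0 : 0 <= s by apply: sumr_ge0 => i _; exact: ltW.
have rrs : rr = s + \sum_(i < K | ~~ (i < p)%N) r i by rewrite /rr (bigID (fun i : 'I_K => (i < p)%N)).
have s1 : s < 1.
  apply: le_lt_trans hsum; rewrite -/rr rrs lerDl; apply: sumr_ge0 => i _; exact: ltW.
have split (a b : R) : \sum_(i < K) r i * (if (i < p)%N then a else b) = s * a + (rr - s) * b.
  rewrite (bigID (fun i : 'I_K => (i < p)%N)) /=.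
  rewrite (eq_bigr (fun i => r i * a)); last by move=> i ->.
  rewrite [X in _ + X](eq_bigr (fun i => r i * b)); last by move=> i /negbTE ->.
  by rewrite -!mulr_suml rrs addrAC subrr add0r.
have geo k : f k.+1 = s * f k.
  elim: k => [|k IH].
    have := rec 0%N; rewrite split /= => h; lra.
  have := rec k.+1; rewrite split /= -IH => h; lra.
have fk k : f k = f 0%N * s ^+ k.
  by elim: k => [|k IH]; rewrite ?expr0 ?mulr1 // geo IH exprS; lra.
have U : [set: state K] = \bigcup_(k in [set: nat]) [set n : state K | topsum n p = k].
  by apply/seteqP; split => n // _; exists (topsum n p).
rewrite U esum_bigcupT in hP1; first last.
- by move=> n; rewrite lee_fin.
- by move=> i j _ _ [n [/= <- <-]].
have E k : \esum_(n in [set n : state K | topsum n p = k]) (P n)%:E = (geometric (f 0%N) s k)%:E.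
  by rewrite Fset Gfin -/(f k) fk.
move: hP1; under eq_esum do rewrite E; move=> hP1.
have f0p : 0 <= f 0%N by rewrite -lee_fin -Gfin; apply: esum_ge0 => n _; rewrite lee_fin; apply: (nnif).
rewrite -nneseries_esumT in hP1; last by move=> n; rewrite lee_fin; apply: geometric_ge0.
have ns : `|s| < 1 by rewrite ger0_norm.
have L : (\sum_(k <oo) (geometric (f 0%N) s k)%:E)%E = (f 0%N * (1 - s)^-1)%:E.
  have -> : f 0%N * (1 - s)^-1 = limn (series (geometric (f 0%N) s)).
    by apply/esym/cvg_lim => //; exact: cvg_geometric_series.
  rewrite -EFin_lim; last first.
    exact: is_cvg_geometric_series.
  by apply/congr_lim/funext => n /=; rewrite /series /= -sumEFin.
have h1 : f 0%N * (1 - s)^-1 = 1 by apply: EFin_inj; rewrite -L hP1.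
have f0 : f 0%N = 1 - s.
  have -> : f 0%N = f 0%N * (1 - s)^-1 * (1 - s) by rewrite mulfVK // subr_eq0 gt_eqF.
  by rewrite h1 mul1r.
by rewrite Fset Gfin -/(f k0) fk f0.
Qed.
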